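(* For every integer $s \geq 1$, $$\mathsf {Brac}_{3,s}\cap \{\alpha_3=\beta_2=0\}=\left\{ \big( (\alpha_1, 1-\alpha_1, 0), (\beta_1, 0, 1-\beta_1) \big) \, : \, \alpha_1,\beta_1\in[0,1],\ \lceil \alpha_1 s\rceil + \lceil \beta_1 s\rceil \leq s \right\},$$ where $\{\alpha_3=\beta_2=0\}$ denotes the set of pairs $(\alpha,\beta)\in\Delta_3^2$ with $\alpha_3=0$ and $\beta_2=0$.
   Context: $\Delta_d=\{\alpha\in\mathbb R^d:\alpha_i\ge0,\ \sum_i\alpha_i=1\}$. For $s\ge1$, $\mathsf{Brac}_{d,s}$ is the set of $(\alpha,\beta)\in\Delta_d^2$ for which there exist $A_1,\dots,A_d,B_1,\dots,B_d\in M_s(\mathbb C)$ with $\sum_i A_iA_i^*=\sum_iB_iB_i^*=I_s$, $\sum_iA_iB_i^*=0$, and $\tfrac1s\|A_i\|_F^2=\alpha_i$, $\tfrac1s\|B_i\|_F^2=\beta_i$ for all $i$, where $\|X\|_F=\operatorname{Tr}(XX^* )^{1/2}$. *)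

(* Defs.v *)
From HB Require Import structures.
From mathcomp Require Import all_boot all_order all_algebra.
From mathcomp Require Import complex.
From mathcomp Require Import reals.
Set Implicit Arguments. Unset Strict Implicit. Unset Printing Implicit Defensive.
Import Order.TTheory GRing.Theory Num.Theory.
Local Open Scope ring_scope.

Definition adj (R : realType) (s : nat) (A : 'M[R[i]]_s) : 'M[R[i]]_s :=
  map_mx (@conjc R) A^T.

Definition simplex (R : realType) (d : nat) (a : 'I_d -> R) : Prop :=
  (forall i, 0 <= a i) /\ \sum_(i < d) a i = 1.

Definition Brac (R : realType) (d s : nat) (a b : 'I_d -> R) : Prop :=
  simplex a /\ simplex b /\
  exists (A B : 'I_d -> 'M[R[i]]_s),
    \sum_(i < d) (A i *m adj (A i)) = 1%:M /\
    \sum_(i < d) (B i *m adj (B i)) = 1%:M /\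
    \sum_(i < d) (A i *m adj (B i)) = 0 /\
    (forall i, \tr (A i *m adj (A i)) = ((s%:R * a i)%:C)%C) /\
    (forall i, \tr (B i *m adj (B i)) = ((s%:R * b i)%:C)%C).

Definition vec3 (R : realType) (x0 x1 x2 : R) : 'I_3 -> R :=
  fun i => match nat_of_ord i with 0 => x0 | 1 => x1 | _ => x2 end.

(* Main.v *)
Require Import Defs.
From HB Require Import structures.
From mathcomp Require Import all_boot all_order all_algebra.
From mathcomp Require Import complex reals spectral.
From mathcomp Require Import zify ring lra.
Import Order.TTheory GRing.Theory Num.Theory.
Set Implicit Arguments. Unset Strict Implicit. Unset Printing Implicit Defensive.
Local Open Scope ring_scope.
Local Open Scope sesquilinear_scope.

From Stdlib Require Import FunctionalExtensionality.
Section Helpers.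
Variable R : realType.
Local Notation C := (R[i] : numClosedFieldType).

Lemma tCM m n p (A : 'M[C]_(m, n)) (B : 'M[C]_(n, p)) :
  (A *m B) ^t* = B ^t* *m A ^t*.
Proof. by rewrite trmx_mul map_mxM. Qed.

Lemma tr_ge0 m n (X : 'M[C]_(m, n)) : 0 <= \tr (X *m X ^t*).
Proof.
rewrite /mxtrace; apply: sumr_ge0 => i _; rewrite mxE.
apply: sumr_ge0 => j _; rewrite !mxE; exact: mul_conjC_ge0.
Qed.

Lemma tr_eq0 m n (X : 'M[C]_(m, n)) : \tr (X *m X ^t*) = 0 -> X = 0.
Proof.
rewrite /mxtrace => /eqP; rewrite psumr_eq0 => [/allP H|i _]; last first.
  rewrite mxE; apply: sumr_ge0 => j _; rewrite !mxE; exact: mul_conjC_ge0.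
apply/matrixP => i j; rewrite mxE.
have /implyP/(_ isT) := H i (mem_index_enum _).
rewrite mxE psumr_eq0 => [/allP/(_ j (mem_index_enum _))|k _]; last first.
  by rewrite !mxE; exact: mul_conjC_ge0.
by rewrite /= !mxE mul_conjC_eq0 => /eqP.
Qed.

Lemma rank_tC m n (X : 'M[C]_(m, n)) : \rank (X ^t*) = \rank X.
Proof. by rewrite mxrank_map mxrank_tr. Qed.

Lemma tr_le_rank n (A1 A2 : 'M[C]_n) :
  A1 *m A1 ^t* + A2 *m A2 ^t* = 1%:M -> \tr (A1 *m A1 ^t*) <= (\rank A1)%:R.
Proof.
move=> H.
pose M := A1 ^t*.
pose W := schmidt (row_base M).
have HW : W \is unitarymx by apply: schmidt_unitarymx; exact: rank_leq_col.
have sMW : (M <= W)%MS.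
  by rewrite (eqmx_schmidt_free (row_base_free M)) eq_row_base.
have [D HD] := submxP sMW.
have HM : D *m W *m W ^t* *m W = D *m W by rewrite mulmxtVK.
rewrite -HD in HM.
have HA1 : A1 = W ^t* *m W *m A1.
  have := congr1 (fun X => X ^t*) HM.
  by rewrite !tCM !trmxCK mulmxA => ->.
rewrite mxtrace_mulC [X in _ *m X]HA1 !mulmxA -mulmxA mxtrace_mulC !mulmxA.
rewrite -(mulmxA W A1).
have -> : A1 *m A1 ^t* = 1%:M - A2 *m A2 ^t* by rewrite -H addrK.
rewrite mulmxBr mulmx1 mulmxBl raddfB /=.
move/unitarymxP: (HW) => ->; rewrite mxtrace1.
have -> : ((\rank A1)%:R : C) = (\rank M)%:R by rewrite rank_tC.
rewrite gerBl -!mulmxA (mulmxA W) -tCM.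
exact: tr_ge0.
Qed.

Lemma rank_ortho n (A1 B1 : 'M[C]_n) :
  A1 *m B1 ^t* = 0 -> (\rank A1 + \rank B1 <= n)%N.
Proof.
move/sub_kermxP => /mxrankS; rewrite mxrank_ker rank_tC => H.
have := rank_leq_col B1. lia.
Qed.
End Helpers.

Lemma sum3 (V : nmodType) (F : 'I_3 -> V) :
  \sum_(i < 3) F i = F (@Ordinal 3 0 isT) + F (@Ordinal 3 1 isT) + F (@Ordinal 3 2 isT).
Proof.
rewrite !big_ord_recr big_ord0 /= add0r.
by congr (F _ + F _ + F _); apply: val_inj.
Qed.

Section Helpers2.
Variable R : realType.
Local Notation C := (R[i] : numClosedFieldType).

Definition Dm n (f : 'I_n -> R) : 'M[C]_n :=
  diag_mx (\row_k ((Num.sqrt (f k))%:C%C)).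

Arguments Dm {n}.

Lemma Dm_t n (f : 'I_n -> R) : (Dm f) ^t* = Dm f.
Proof.
rewrite /Dm tr_diag_mx map_diag_mx; congr diag_mx; apply/rowP=> k.
by rewrite !mxE; apply: conjc_real.
Qed.

Lemma Dm_mul n (f g : 'I_n -> R) :
  Dm f *m (Dm g) ^t* = diag_mx (\row_k ((Num.sqrt (f k) * Num.sqrt (g k))%:C%C)).
Proof.
rewrite Dm_t /Dm mulmx_diag; congr diag_mx; apply/rowP => k.
by rewrite !mxE rmorphM.
Qed.

Lemma Dm_sq n (f : 'I_n -> R) : (forall k, 0 <= f k) ->
  Dm f *m (Dm f) ^t* = diag_mx (\row_k (f k)%:C%C).
Proof.
move=> H; rewrite Dm_mul; congr diag_mx; apply/rowP => k.
by rewrite !mxE -expr2 sqr_sqrtr.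
Qed.

Lemma tr_diagR n (f : 'I_n -> R) :
  \tr (diag_mx (\row_k (f k)%:C%C) : 'M[C]_n) = (\sum_k f k)%:C%C.
Proof.
rewrite mxtrace_diag rmorph_sum; apply: eq_bigr => k _; by rewrite mxE.
Qed.

Lemma sum_ind n l u (c : R) : (l <= u <= n)%N ->
  \sum_(k < n) (if (l <= k < u)%N then c else 0) = c *+ (u - l).
Proof.
move=> /andP[Hlu Hun].
rewrite -(big_mkord xpredT (fun k => if (l <= k < u)%N then c else 0)).
rewrite (big_cat_nat (leq0n l) (leq_trans Hlu Hun)) /=.
rewrite (big_cat_nat Hlu Hun) /=.
rewrite big1_seq; last first.
  move=> k /andP[_]; rewrite mem_index_iota => /andP[_ Hk].
  by rewrite leqNgt Hk.
rewrite [X in _ + (_ + X)]big1_seq; last first.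
  move=> k /andP[_]; rewrite mem_index_iota => /andP[Hk _].
  by rewrite ltnNge Hk andbF.
transitivity (0 + (\sum_(l <= i < u) c + (0:R))).
  f_equal; f_equal; apply: eq_big_nat => k Hk; by rewrite Hk.
by rewrite sumr_const_nat; apply: (etrans (add0r _)); apply: addr0.
Qed.

End Helpers2.

Section Main.
Variable R : realType.

Lemma adjE s (A : 'M[R[i]]_s) : adj A = A ^t*.
Proof. by []. Qed.

Lemma adj0 s : adj (0 : 'M[R[i]]_s) = 0.
Proof. by apply/matrixP => i j; rewrite !mxE conjc0. Qed.

Lemma div_props (x : R) (n : nat) : 0 <= x -> x <= n%:R ->
  0 <= x / n%:R <= 1 /\ (x / n%:R) *+ n = x.
Proof.
move=> hx hxn; case: n hxn => [|n] hxn.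
  have x0 : x = 0 by apply/le_anti; rewrite hxn hx.
  by rewrite x0 mul0r mulr0n lexx ler01.
have hn : (0 : R) < n.+1%:R by rewrite ltr0n.
split; last by rewrite -mulr_natr divfK // pnatr_eq0.
by rewrite divr_ge0 ?ler0n //= ler_pdivrMr // mul1r.
Qed.

End Main.

Local Close Scope sesquilinear_scope.

Theorem proposition3p10 (R : realType) (s : nat) (hs : (1 <= s)%N)
    (a b : 'I_3 -> R) :
  (@Brac R 3 s a b /\ a (@Ordinal 3 2 isT) = 0 /\ b (@Ordinal 3 1 isT) = 0) <->
  (exists a1 b1 : R,
     0 <= a1 <= 1 /\ 0 <= b1 <= 1 /\
     (Num.ceil (a1 * s%:R) + Num.ceil (b1 * s%:R) <= s%:Z)%R /\
     a = vec3 a1 (1 - a1) 0 /\ b = vec3 b1 0 (1 - b1)).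
Proof.
split.
- move=> [[[Ha0 Ha1] [[Hb0 Hb1] [A [B [HA [HB [HAB [HtA HtB]]]]]]]] [Ha2 Hb2]].
  rewrite sum3 in Ha1. rewrite sum3 in Hb1.
  rewrite sum3 in HA. rewrite sum3 in HB. rewrite sum3 in HAB.
  have HA2 : A (@Ordinal 3 2 isT) = 0.
    apply: tr_eq0; rewrite -adjE HtA Ha2 mulr0; exact: rmorph0.
  have HB1 : B (@Ordinal 3 1 isT) = 0.
    apply: tr_eq0; rewrite -adjE HtB Hb2 mulr0; exact: rmorph0.
  rewrite HA2 mul0mx addr0 !adjE in HA.
  rewrite HB1 mul0mx addr0 !adjE in HB.
  rewrite HA2 HB1 adj0 mulmx0 mul0mx !addr0 adjE in HAB.
  have rA := tr_le_rank HA.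
  have rB := tr_le_rank HB.
  rewrite -adjE HtA in rA. rewrite -adjE HtB in rB.
  have ort := rank_ortho HAB.
  have cA : Num.ceil (a (@Ordinal 3 0 isT) * s%:R) <= (\rank (A (@Ordinal 3 0 isT)))%:Z.
    rewrite ceil_le_int.
    change (a (@Ordinal 3 0 isT) * s%:R <= (\rank (A (@Ordinal 3 0 isT)))%:R).
    by rewrite -lecR rmorph_nat mulrC.
  have cB : Num.ceil (b (@Ordinal 3 0 isT) * s%:R) <= (\rank (B (@Ordinal 3 0 isT)))%:Z.
    rewrite ceil_le_int.
    change (b (@Ordinal 3 0 isT) * s%:R <= (\rank (B (@Ordinal 3 0 isT)))%:R).
    by rewrite -lecR rmorph_nat mulrC.
  exists (a (@Ordinal 3 0 isT)), (b (@Ordinal 3 0 isT)).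
  have := Ha0 (@Ordinal 3 0 isT); have := Ha0 (@Ordinal 3 1 isT).
  have := Hb0 (@Ordinal 3 0 isT); have := Hb0 (@Ordinal 3 2 isT).
  move=> h1 h2 h3 h4.
  split; first by apply/andP; split; lra.
  split; first by apply/andP; split; lra.
  split.
    apply: le_trans (lerD cA cB) _; rewrite -PoszD lez_nat; exact: ort.
  split; apply: functional_extensionality => -[[|[|[|?]]] Hi] //=.
  + by congr a; apply: val_inj.
  + have -> : Ordinal Hi = @Ordinal 3 1 isT by apply: val_inj.
    by rewrite -Ha1 Ha2 addr0 [a _ + a _]addrC addrK.
  + have -> : Ordinal Hi = @Ordinal 3 2 isT by apply: val_inj.
    by [].
  + by congr b; apply: val_inj.
  + have -> : Ordinal Hi = @Ordinal 3 1 isT by apply: val_inj.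
    by [].
  + have -> : Ordinal Hi = @Ordinal 3 2 isT by apply: val_inj.
    by rewrite -Hb1 Hb2 addr0 [b _ + b _]addrC addrK.
- move=> [a1 [b1 [/andP[a0 a1le] [/andP[b0 b1le] [Hc [-> ->]]]]]].
  have hs0 : (0 : R) <= s%:R by rewrite ler0n.
  have as0 : 0 <= a1 * s%:R by rewrite mulr_ge0.
  have bs0 : 0 <= b1 * s%:R by rewrite mulr_ge0.
  set r := `|Num.ceil (a1 * s%:R)|%N.
  set t := `|Num.ceil (b1 * s%:R)|%N.
  have Hr : (r%:Z = Num.ceil (a1 * s%:R)).
    by rewrite /r gez0_abs // ceil_ge0; apply: lt_le_trans as0; rewrite ltrN10.
  have Ht : (t%:Z = Num.ceil (b1 * s%:R)).
    by rewrite /t gez0_abs // ceil_ge0; apply: lt_le_trans bs0; rewrite ltrN10.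
  have Hrle : a1 * s%:R <= r%:R.
    by have := ceil_ge (a1 * s%:R); rewrite -Hr.
  have Htle : b1 * s%:R <= t%:R.
    by have := ceil_ge (b1 * s%:R); rewrite -Ht.
  have Hrt : (r + t <= s)%N by rewrite -lez_nat PoszD Hr Ht.
  have [/andP[c0 c1] cs] := div_props as0 Hrle.
  have [/andP[d0 d1] ds] := div_props bs0 Htle.
  pose p := fun k : 'I_s => if (0 <= k < r)%N then a1 * s%:R / r%:R else 0.
  pose q := fun k : 'I_s => if (r <= k < r + t)%N then b1 * s%:R / t%:R else 0.
  have Hp0 : forall k, 0 <= p k by move=> k; rewrite /p; case: ifP.
  have Hp1 : forall k, 0 <= 1 - p k by move=> k; rewrite /p subr_ge0; case: ifP.
  have Hq0 : forall k, 0 <= q k by move=> k; rewrite /q; case: ifP.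
  have Hq1 : forall k, 0 <= 1 - q k by move=> k; rewrite /q subr_ge0; case: ifP.
  have Hpq : forall k, p k = 0 \/ q k = 0.
    move=> k; rewrite /p /q; case: ifP => [/andP[_ hk]|]; last by left.
    by right; rewrite leqNgt hk.
  have Sp : \sum_(k < s) p k = a1 * s%:R.
    by rewrite /p sum_ind ?leq0n ?subn0 //= (leq_trans (leq_addr t r) Hrt).
  have Sq : \sum_(k < s) q k = b1 * s%:R.
    by rewrite /q sum_ind ?leq_addr ?Hrt // addKn.
  have S1 : forall f : 'I_s -> R, \sum_(k < s) (1 - f k) = s%:R - \sum_(k < s) f k.
    by move=> f; rewrite sumrB sumr_const card_ord.
  split; last by split.
  split; [|split].
  + split.
    * by move=> -[[|[|[|?]]] Hi] //; rewrite /vec3 /=; lra.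
    * by rewrite sum3 /vec3 /=; lra.
  + split.
    * by move=> -[[|[|[|?]]] Hi] //; rewrite /vec3 /=; lra.
    * by rewrite sum3 /vec3 /=; lra.
  + exists (fun i : 'I_3 => match nat_of_ord i with 0 => Dm p | 1 => Dm (fun k => 1 - p k) | _ => 0 end).
    exists (fun i : 'I_3 => match nat_of_ord i with 0 => Dm q | 1 => 0 | _ => Dm (fun k => 1 - q k) end).
    split; [|split; [|split; [|split]]].
    * rewrite sum3 /= !adjE !Dm_sq // mul0mx addr0.
      apply/matrixP => i j; rewrite !mxE -mulrnDl -rmorphD /= addrC subrK.
      by rewrite rmorph1.
    * rewrite sum3 /= !adjE !Dm_sq // mul0mx addr0.
      apply/matrixP => i j; rewrite !mxE -mulrnDl -rmorphD /= addrC subrK.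
      by rewrite rmorph1.
    * rewrite sum3 /= adj0 mulmx0 mul0mx !addr0 adjE Dm_mul.
      apply/matrixP => i j; rewrite !mxE.
      by case: (Hpq i) => ->; rewrite sqrtr0 ?mul0r ?mulr0 rmorph0 mul0rn.
    * move=> -[[|[|[|?]]] Hi] //=.
      - by rewrite adjE Dm_sq // tr_diagR Sp mulrC.
      - rewrite adjE Dm_sq // tr_diagR S1 Sp; congr (_%:C)%C; rewrite /vec3 /=; ring.
      - by rewrite /vec3 /= mul0mx mxtrace0 mulr0 rmorph0.
    * move=> -[[|[|[|?]]] Hi] //=.
      - by rewrite adjE Dm_sq // tr_diagR Sq mulrC.
      - by rewrite /vec3 /= mul0mx mxtrace0 mulr0 rmorph0.
      - rewrite adjE Dm_sq // tr_diagR S1 Sq; congr (_%:C)%C; rewrite /vec3 /=; ring.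
Qed.
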